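(* Let $p\ge3$, $d_j>0$, $\gamma_j\ge0$ ($j=1,\ldots,p$), with indices sorted so that $d_1^2/(d_1+\gamma_1)\ge\cdots\ge d_p^2/(d_p+\gamma_p)$, and for $3\le k\le p$ let \[ M_k=\frac{(k-2)^2}{\sum_{j=1}^k (d_j+\gamma_j)/d_j^2}+\sum_{j=k+1}^p\frac{d_j^2}{d_j+\gamma_j}. \] Then the sequence $(M_3,M_4,\ldots,M_p)$ is nonincreasing: for $3\le k\le p-1$, $M_k\ge M_{k+1}$, with equality if and only if \[ \frac{k-2}{\sum_{j=1}^k (d_j+\gamma_j)/d_j^2}=\frac{d_{k+1}^2}{d_{k+1}+\gamma_{k+1}}. \] Furthermore, let $A^\dagger=\operatorname{diag}(a_1^\dagger,\ldots,a_p^\dagger)$ be the unique maximizer of $\sum_j d_ja_j-2\max_j d_ja_j$ over $a_j\ge0$ with $\sum_j(d_j+\gamma_j)a_j^2=\sum_j d_j^2/(d_j+\gamma_j)$, and let $\nu$ be the largest index with $d_\nu a_\nu^\dagger=\max_j d_ja_j^\dagger$. If $\nu\le p-1$, then the condition $d_\nu a_\nu^\dagger>d_{\nu+1}a_{\nu+1}^\dagger$ is equivalent to \[ \frac{\nu-2}{\sum_{j=1}^\nu (d_j+\gamma_j)/d_j^2}>\frac{d_{\nu+1}^2}{d_{\nu+1}+\gamma_{\nu+1}}; \] consequently $\nu$ is the smallest index $k$ with $3\le k\le p-1$ such that $\frac{k-2}{\sum_{j=1}^k (d_j+\gamma_j)/d_j^2}>\frac{d_{k+1}^2}{d_{k+1}+\gamma_{k+1}}$,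 and $M_\nu>M_{\nu+1}$.
   Context: The maximizer $A^\dagger$ exists and is unique; $\nu\ge3$. *)

(* Defs.v *)
(* abstract R : realType (reals). Indices are 1-based naturals. *)
From HB Require Import structures.
From mathcomp Require Import all_boot all_order all_algebra.
From mathcomp Require Import reals.
Set Implicit Arguments. Unset Strict Implicit. Unset Printing Implicit Defensive.
Import Order.TTheory GRing.Theory Num.Theory.
Local Open Scope ring_scope.

Section Defs.
Variable R : realType.

Definition cc (d g : nat -> R) (j : nat) : R := d j ^+ 2 / (d j + g j).

Definition Ssum (d g : nat -> R) (k : nat) : R :=
  \sum_(1 <= j < k.+1) (d j + g j) / d j ^+ 2.

Definition Mk (d g : nat -> R) (p k : nat) : R :=
  (k%:R - 2) ^+ 2 / Ssum d g k + \sum_(k.+1 <= j < p.+1) cc d g j.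

Definition ratk (d g : nat -> R) (k : nat) : R := (k%:R - 2) / Ssum d g k.

(* max_j d_j b_j over j = 1..p (with 0 as neutral; all terms are >= 0 on the
   feasible set) *)
Definition maxdb (d b : nat -> R) (p : nat) : R :=
  \big[Num.max/0]_(1 <= j < p.+1) (d j * b j).

Definition obj (d b : nat -> R) (p : nat) : R :=
  \sum_(1 <= j < p.+1) d j * b j - 2 * maxdb d b p.

Definition feasible (d g b : nat -> R) (p : nat) : Prop :=
  (forall j, (1 <= j <= p)%N -> 0 <= b j) /\
  \sum_(1 <= j < p.+1) (d j + g j) * b j ^+ 2 = \sum_(1 <= j < p.+1) cc d g j.

End Defs.

(* Main.v *)
Require Import Defs.
From HB Require Import structures.
From mathcomp Require Import all_boot all_order all_algebra.
From mathcomp Require Import reals.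
From mathcomp Require Import ring lra zify.
Import Order.TTheory GRing.Theory Num.Theory.
Local Open Scope ring_scope.

Lemma sum_nat_ge0 (R : realType) m n (F : nat -> R) :
  (forall i, (m <= i < n)%N -> 0 <= F i) -> 0 <= \sum_(m <= i < n) F i.
Proof. move=> H; rewrite big_nat_cond; apply: sumr_ge0 => i /andP[Hi _]; exact: H. Qed.

Lemma sum_nat_le (R : realType) m n (F G : nat -> R) :
  (forall i, (m <= i < n)%N -> F i <= G i) ->
  \sum_(m <= i < n) F i <= \sum_(m <= i < n) G i.
Proof. move=> H; rewrite big_nat_cond [X in _ <= X]big_nat_cond.
apply: ler_sum => i /andP[Hi _]; exact: H. Qed.

Lemma term_le_sum (R : realType) m n (F : nat -> R) j :
  (forall i, (m <= i < n)%N -> 0 <= F i) -> (m <= j < n)%N ->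
  F j <= \sum_(m <= i < n) F i.
Proof.
move=> H /andP[h1 h2]; rewrite (big_cat_nat (n:=j)) ?h1 ?(ltnW h2) //= (big_ltn (F:=F) h2).
have A : 0 <= \sum_(m <= i < j) F i by apply: sum_nat_ge0 => i /andP[? ?]; apply: H; apply/andP; split => //; lia.
have B : 0 <= \sum_(j.+1 <= i < n) F i by apply: sum_nat_ge0 => i /andP[? ?]; apply: H; apply/andP; split => //; lia.
lra.
Qed.

Section S.
Variable R : realType.
Variables (p : nat) (d g : nat -> R).
Hypothesis hd : forall j, (1 <= j <= p)%N -> 0 < d j.
Hypothesis hg : forall j, (1 <= j <= p)%N -> 0 <= g j.
Hypothesis hs : forall j, (1 <= j < p)%N -> cc d g j.+1 <= cc d g j.

Definition ww (j : nat) : R := (d j + g j) / d j ^+ 2.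

Lemma dg_gt0 {j} : (1 <= j <= p)%N -> 0 < d j + g j.
Proof. move=> h; have := hd _ h; have := hg _ h; lra. Qed.

Lemma c_gt0 {j} : (1 <= j <= p)%N -> 0 < cc d g j.
Proof. move=> h; rewrite /cc; apply: divr_gt0; [exact: exprn_gt0 (hd _ h) | exact: dg_gt0]. Qed.

Lemma w_gt0 {j} : (1 <= j <= p)%N -> 0 < ww j.
Proof. move=> h; rewrite /ww; apply: divr_gt0; [exact: dg_gt0 | exact: exprn_gt0 (hd _ h)]. Qed.

Lemma wc {j} : (1 <= j <= p)%N -> ww j * cc d g j = 1.
Proof.
move=> h; have h1 := hd _ h; have h2 := dg_gt0 h; rewrite /ww /cc.
by field; rewrite (gt_eqF h1) (gt_eqF h2).
Qed.

Lemma Srec k : Ssum d g k.+1 = Ssum d g k + ww k.+1.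
Proof. by rewrite /Ssum big_nat_recr. Qed.

Lemma S_ge0 {k} : (k <= p)%N -> 0 <= Ssum d g k.
Proof.
move=> hk; apply: sum_nat_ge0 => i /andP[h1 h2]; apply: ltW; apply: w_gt0.
apply/andP; split=> //; lia.
Qed.

Lemma S_gt0 {k} : (1 <= k <= p)%N -> 0 < Ssum d g k.
Proof.
case: k => [//|k] /andP[_ h]; rewrite Srec.
have := S_ge0 (ltnW h); have : 0 < ww k.+1 by apply: w_gt0; apply/andP; split.
lra.
Qed.

Lemma c_mono n i : (1 <= i)%N -> (i + n <= p)%N -> cc d g (i + n) <= cc d g i.
Proof.
move=> h1; elim: n => [|n IH] h2; first by rewrite addn0.
apply: le_trans (IH _); last lia.
rewrite addnS; apply: hs; apply/andP; split; lia.
Qed.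

Lemma c_anti i j : (1 <= i)%N -> (i <= j)%N -> (j <= p)%N -> cc d g j <= cc d g i.
Proof. move=> h1 h2 h3; rewrite -(subnKC h2); apply: c_mono => //; lia. Qed.

Lemma ratk_le_c {k} : (3 <= k <= p)%N ->
  (forall j, (3 <= j)%N -> (j < k)%N -> ~ (cc d g j.+1 < ratk d g j)) ->
  ratk d g k <= cc d g k.
Proof.
case: k => [//|k] /andP[h3 hp] hmin.
have hk : (1 <= k.+1 <= p)%N by apply/andP; split => //; lia.
have Hc := c_gt0 hk; have Hw := wc hk.
have Sk0 : 0 <= Ssum d g k by apply: S_ge0; lia.
have claim : k.+1%:R - 3 <= cc d g k.+1 * Ssum d g k.
  have [hk3|hk3] := leqP 3 k.
    have H := hmin k hk3 (ltnSn k).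
    have : ratk d g k <= cc d g k.+1 by rewrite leNgt; apply/negP.
    rewrite /ratk.
    have Sk : 0 < Ssum d g k by apply: S_gt0; apply/andP; split; lia.
    rewrite (ler_pdivrMr _ _ Sk) mulrS; lra.
  have ek : k = 2%N by lia.
  subst k.
  have : 0 <= cc d g 3 * Ssum d g 2.
    by apply: mulr_ge0; [apply: ltW | apply: S_ge0; lia].
  have -> : (3%:R : R) - 3 = 0 by rewrite subrr.
  done.
rewrite /ratk Srec.
have SS : 0 < Ssum d g k + ww k.+1 by rewrite -Srec; apply: S_gt0.
rewrite (ler_pdivrMr _ _ SS) mulrDr [_ * ww _]mulrC Hw.
move: claim; rewrite !mulrS; lra.
Qed.


Definition beta k j := if (j <= k)%N then ratk d g k else cc d g j.

Lemma split_at (F : nat -> R) k : (k <= p)%N ->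
  \sum_(1 <= j < p.+1) F j = \sum_(1 <= j < k.+1) F j + \sum_(k.+1 <= j < p.+1) F j.
Proof. move=> h; by rewrite (big_cat_nat (n:=k.+1)). Qed.

Lemma ratk_gt0 {k} : (3 <= k <= p)%N -> 0 < ratk d g k.
Proof.
move=> /andP[h1 h2]; rewrite /ratk; apply: divr_gt0; last first.
  by apply: S_gt0; apply/andP; split => //; lia.
have : (3%:R : R) <= k%:R by rewrite ler_nat.
lra.
Qed.

Lemma rS {k} : (3 <= k <= p)%N -> ratk d g k * Ssum d g k = k%:R - 2.
Proof.
move=> /andP[h1 h2]; rewrite /ratk divfK // gt_eqF //.
by apply: S_gt0; apply/andP; split => //; lia.
Qed.

Lemma sumw_beta2 {k} : (3 <= k <= p)%N ->
  \sum_(1 <= j < p.+1) ww j * beta k j ^+ 2 = Mk d g p k.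
Proof.
move=> hk; have /andP[h1 h2] := hk.
rewrite (@split_at _ k h2) /Mk; congr (_ + _).
  rewrite (eq_big_nat _ _ (F2 := fun j => ww j * ratk d g k ^+ 2)); last first.
    by move=> j /andP[_ hj]; have hj' : (j <= k)%N := hj; rewrite /beta hj'.
  rewrite -mulr_suml -/(Ssum d g k).
  have S0 : Ssum d g k != 0 by rewrite gt_eqF //; apply: S_gt0; apply/andP; split => //; lia.
  rewrite -(rS hk) /ratk; field => //.
apply: eq_big_nat => j /andP[hj1 hj2].
have hj : (1 <= j <= p)%N by apply/andP; split; lia.
rewrite /beta leqNgt hj1 /= expr2 mulrA wc // mul1r //.
Qed.

Lemma obj_le k b : (3 <= k <= p)%N ->
  (forall j, (3 <= j)%N -> (j < k)%N -> ~ (cc d g j.+1 < ratk d g j)) ->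
  feasible d g b p ->
  obj d b p <= \sum_(1 <= j < p.+1) ww j * beta k j * (d j * b j).
Proof.
move=> hk hmin [hb _]; have /andP[h1 h2] := hk.
set m := maxdb d b p.
have hm : forall j, (1 <= j <= p)%N -> d j * b j <= m.
  move=> j hj; rewrite /m /maxdb.
  apply: (le_bigmax_seq 0 j xpredT (fun i => d i * b i)) => //.
  by rewrite mem_index_iota; lia.
have rc : forall j, (1 <= j <= k)%N -> ww j * ratk d g k <= 1.
  move=> j hj; have hj' : (1 <= j <= p)%N by apply/andP; split; lia.
  rewrite -(wc hj') ler_wpM2l //; first exact: ltW (w_gt0 hj').
  apply: le_trans (ratk_le_c hk hmin) _; apply: c_anti; lia.
suff : \sum_(1 <= j < p.+1) d j * b j - \sum_(1 <= j < p.+1) ww j * beta k j * (d j * b j) <= 2 * m.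
  rewrite /obj -/m; lra.
rewrite -sumrB (@split_at _ k h2).
have -> : \sum_(k.+1 <= j < p.+1) (d j * b j - ww j * beta k j * (d j * b j)) = 0.
  rewrite big_nat_cond big1 // => j /andP[/andP[hj1 hj2] _].
  have hj : (1 <= j <= p)%N by apply/andP; split; lia.
  by rewrite /beta leqNgt hj1 /= wc // mul1r subrr.
rewrite addr0.
apply: le_trans (_ : \sum_(1 <= j < k.+1) (1 - ww j * ratk d g k) * m <= _).
  apply: sum_nat_le => j /andP[hj1 hj2].
  have hj' : (j <= k)%N := hj2.
  rewrite /beta hj' -[X in X - _]mul1r -mulrBl ler_wpM2l //.
    by have := rc j ltac:(lia); lra.
  by apply: hm; lia.
rewrite -mulr_suml sumrB sumr_const_nat -mulr_suml -/(Ssum d g k) mulrC.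
rewrite [Ssum _ _ _ * _]mulrC (rS hk) subSS subn0 mulr_natl.
have -> : (1 *+ k : R) - (k%:R - 2) = 2 by rewrite -/(k%:R); ring.
by rewrite mulr_natr.
Qed.


Lemma main k a : (3 <= k <= p)%N ->
  (forall j, (3 <= j)%N -> (j < k)%N -> ~ (cc d g j.+1 < ratk d g j)) ->
  ((k < p)%N -> cc d g k.+1 < ratk d g k) ->
  feasible d g a p -> (forall b, feasible d g b p -> obj d b p <= obj d a p) ->
  exists lam, 0 < lam /\ forall j, (1 <= j <= p)%N -> d j * a j = lam * beta k j.
Proof.
move=> hk hmin hlast ha hopt; have /andP[h1 h2] := hk.
set r := ratk d g k.
have r0 : 0 < r := ratk_gt0 hk.
set C := \sum_(1 <= j < p.+1) cc d g j.
set M := Mk d g p k.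
have C0 : 0 < C.
  rewrite /C (@big_ltn _ _ _ 1 p.+1 (cc d g)); last by lia.
  have := @c_gt0 1 ltac:(lia).
  have : 0 <= \sum_(2 <= j < p.+1) cc d g j.
    by apply: sum_nat_ge0 => j hj; apply: ltW; apply: c_gt0; lia.
  lra.
have beta0 : forall j, (1 <= j <= p)%N -> 0 < beta k j.
  by move=> j hj; rewrite /beta; case: leqP => _ //; exact: c_gt0.
have M0 : 0 < M.
  rewrite /M -(sumw_beta2 hk).
  apply: lt_le_trans (@term_le_sum R 1 p.+1 (fun j => ww j * beta k j ^+ 2) 1 _ _).
  - by apply: mulr_gt0; [apply: w_gt0 | apply: exprn_gt0; apply: beta0]; lia.
  - move=> i hi; apply: mulr_ge0; [apply: ltW; apply: w_gt0 | apply: sqr_ge0]; lia.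
  - lia.
set lam := Num.sqrt (C / M).
have lam0 : 0 < lam by rewrite sqrtr_gt0 divr_gt0.
have lam2 : lam ^+ 2 * M = C.
  by rewrite sqr_sqrtr ?divfK ?gt_eqF // ltW // divr_gt0.
have betale : forall j, (1 <= j <= p)%N -> beta k j <= r.
  move=> j hj; rewrite /beta; case: leqP => hjk //.
  apply: ltW; apply: le_lt_trans (hlast _); [apply: c_anti; lia | lia].
pose bs j := lam * beta k j / d j.
have xs : forall j, (1 <= j <= p)%N -> d j * bs j = lam * beta k j.
  by move=> j hj; rewrite /bs mulrC divfK // gt_eqF //; exact: hd.
have fs : feasible d g bs p.
  split.
    move=> j hj; rewrite /bs; apply: divr_ge0; last by apply: ltW; exact: hd.
    by apply: mulr_ge0; apply: ltW => //; exact: beta0.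
  rewrite -/C -lam2 /M -(sumw_beta2 hk) mulr_sumr; apply: eq_big_nat => j hj.
  have hj' : (1 <= j <= p)%N by lia.
  have hdj := hd _ hj'; rewrite /bs /ww.
  by field; rewrite gt_eqF.
have objs : obj d bs p = lam * M.
  have mx : maxdb d bs p = lam * r.
    apply: le_anti; apply/andP; split.
      rewrite /maxdb big_nat_cond; apply: bigmax_le => [|j /andP[hj _]].
        by apply: ltW; apply: mulr_gt0.
      rewrite xs; last by lia.
      rewrite ler_pM2l //; apply: betale; lia.
    rewrite /maxdb; apply: le_trans (le_bigmax_seq 0 k xpredT (fun i => d i * bs i) _ _) => //; last first.
      by rewrite mem_index_iota; lia.
    rewrite xs; last by lia.
    by rewrite /beta leqnn.
  have e1 : \sum_(1 <= j < p.+1) d j * bs j = lam * (k%:R * r + \sum_(k.+1 <= j < p.+1) cc d g j).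
    rewrite (eq_big_nat _ _ (F2 := fun j => lam * beta k j)); last by move=> j hj; apply: xs; lia.
    rewrite -mulr_sumr (@split_at _ k h2); congr (_ * (_ + _)).
      rewrite (eq_big_nat _ _ (F2 := fun _ => r)); last first.
        by move=> j /andP[_ hj]; have hj' : (j <= k)%N := hj; rewrite /beta hj'.
      by rewrite sumr_const_nat subSS subn0 mulr_natl.
    by apply: eq_big_nat => j /andP[hj _]; rewrite /beta leqNgt hj.
  rewrite /obj e1 mx /M /Mk /r /ratk; ring.
have le1 := hopt _ fs; rewrite objs in le1.
have le2 := @obj_le k a hk hmin ha.
set X := \sum_(1 <= j < p.+1) ww j * beta k j * (d j * a j) in le2.
have Qa : \sum_(1 <= j < p.+1) ww j * (d j * a j) ^+ 2 = C.
  have [_ Ha] := ha; rewrite /C -Ha; apply: eq_big_nat => j hj.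
  have hj' : (1 <= j <= p)%N by lia.
  have hdj := hd _ hj'; rewrite /ww.
  by field; rewrite gt_eqF.
have E : \sum_(1 <= j < p.+1) ww j * (lam * beta k j - d j * a j) ^+ 2
    = lam ^+ 2 * M - 2 * lam * X + C.
  rewrite -Qa /M -(sumw_beta2 hk) /X !mulr_sumr -sumrB -big_split /=.
  by apply: eq_big_nat => j _; ring.
have H3 : lam ^+ 2 * M <= lam * X.
  by rewrite expr2 -mulrA ler_pM2l //; lra.
have Hsum : \sum_(1 <= j < p.+1) ww j * (lam * beta k j - d j * a j) ^+ 2 <= 0.
  rewrite E; lra.
exists lam; split => // j hj.
have t0 : ww j * (lam * beta k j - d j * a j) ^+ 2 = 0.
  apply: le_anti; apply/andP; split; last first.
    by apply: mulr_ge0; [apply: ltW; exact: w_gt0 | exact: sqr_ge0].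
  apply: le_trans Hsum.
  apply: (@term_le_sum R 1 p.+1 (fun j => ww j * (lam * beta k j - d j * a j) ^+ 2) j); last by lia.
  move=> i hi; apply: mulr_ge0; [apply: ltW; apply: w_gt0; lia | exact: sqr_ge0].
move: t0 => /eqP; rewrite mulf_eq0 (gt_eqF (w_gt0 hj)) /= sqrf_eq0 subr_eq0.
by move=> /eqP ->.
Qed.

Lemma nu_eq k a nu : (3 <= k <= p)%N ->
  (forall j, (3 <= j)%N -> (j < k)%N -> ~ (cc d g j.+1 < ratk d g j)) ->
  ((k < p)%N -> cc d g k.+1 < ratk d g k) ->
  feasible d g a p -> (forall b, feasible d g b p -> obj d b p <= obj d a p) ->
  (1 <= nu <= p)%N -> d nu * a nu = maxdb d a p ->
  (forall j, (nu < j <= p)%N -> d j * a j <> maxdb d a p) ->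
  nu = k /\ ((k < p)%N -> d k.+1 * a k.+1 < d k * a k).
Proof.
move=> hk hmin hlast ha hopt hnu hnumax hnulast.
have /andP[h1 h2] := hk.
have [lam [lam0 hx]] := @main k a hk hmin hlast ha hopt.
set r := ratk d g k.
have r0 : 0 < r := ratk_gt0 hk.
have blt : forall j, (k < j <= p)%N -> beta k j < r.
  move=> j /andP[hj1 hj2]; rewrite /beta leqNgt hj1 /=.
  apply: le_lt_trans (hlast _); [apply: c_anti; lia | lia].
have betale : forall j, (1 <= j <= p)%N -> beta k j <= r.
  move=> j hj; case: (leqP j k) => hjk; first by rewrite /beta hjk.
  by apply: ltW; apply: blt; lia.
have hkk : d k * a k = lam * r by rewrite hx ?/beta ?leqnn //; lia.
have mx : maxdb d a p = lam * r.
  apply: le_anti; apply/andP; split.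
    rewrite /maxdb big_nat_cond; apply: bigmax_le => [|j /andP[hj _]].
      by apply: ltW; apply: mulr_gt0.
    rewrite hx; last by lia.
    rewrite ler_pM2l //; apply: betale; lia.
  rewrite /maxdb -hkk; apply: (le_bigmax_seq 0 k xpredT (fun i => d i * a i)) => //.
  by rewrite mem_index_iota; lia.
have nuk : nu = k.
  apply/eqP; rewrite eqn_leq; apply/andP; split.
    rewrite leqNgt; apply/negP => knu.
    move: hnumax; rewrite mx hx // => /(mulfI (lt0r_neq0 lam0)) eb.
    have := blt nu ltac:(lia); rewrite eb ltxx //.
  rewrite leqNgt; apply/negP => nuk.
  by apply: (hnulast k); [lia | rewrite mx].
split => // kp.
rewrite hkk hx; last by lia.
by rewrite ltr_pM2l //; apply: blt; lia.
Qed.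

Lemma mono k : (3 <= k)%N -> (k < p)%N ->
  Mk d g p k.+1 <= Mk d g p k /\
  (Mk d g p k = Mk d g p k.+1 <-> ratk d g k = cc d g k.+1).
Proof.
move=> h3 hkp.
have hk1 : (1 <= k.+1 <= p)%N by lia.
have c0 := c_gt0 hk1; have wc1 := wc hk1.
have S0 : 0 < Ssum d g k by apply: S_gt0; lia.
have wv : ww k.+1 = (cc d g k.+1)^-1.
  apply: (mulIf (lt0r_neq0 c0)); by rewrite wc1 mulVf // gt_eqF.
have S1 : 0 < Ssum d g k + (cc d g k.+1)^-1 by rewrite -wv -Srec; apply: S_gt0; lia.
set S := Ssum d g k; set c := cc d g k.+1; set n := (k%:R - 2 : R).
have den0 : 0 < c * S * (S + c^-1) by do 2?apply: mulr_gt0.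
have diff : Mk d g p k - Mk d g p k.+1 = (n - c * S) ^+ 2 / (c * S * (S + c^-1)).
  rewrite /Mk Srec -/S wv (@big_ltn _ _ _ k.+1 p.+1 (cc d g)) -/c; last by lia.
  have -> : (k.+1%:R - 2 : R) = n + 1 by rewrite /n mulrS; ring.
  rewrite -/n; field.
  have Sc : 0 < S * c + 1 by apply: addr_gt0 => //; apply: mulr_gt0.
  by rewrite (gt_eqF Sc) (gt_eqF c0) (gt_eqF S0).
split.
  rewrite -subr_ge0 diff; apply: divr_ge0 => //; [exact: sqr_ge0 | exact: ltW].
split.
  move/eqP; rewrite -subr_eq0 diff mulf_eq0 invr_eq0 (gt_eqF den0) orbF sqrf_eq0 subr_eq0.
  move/eqP => e; rewrite /ratk -/S -/n e mulfK // gt_eqF //.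
rewrite /ratk -/S -/n => e.
apply/eqP; rewrite -subr_eq0 diff; apply/eqP.
have -> : n = c * S by rewrite -e divfK // gt_eqF.
by rewrite subrr expr0n /= mul0r.
Qed.

End S.

Theorem corollary2 (R : realType) (p : nat) (d g a : nat -> R) (nu : nat) :
  (3 <= p)%N ->
  (forall j, (1 <= j <= p)%N -> 0 < d j) ->
  (forall j, (1 <= j <= p)%N -> 0 <= g j) ->
  (forall j, (1 <= j < p)%N -> cc d g j.+1 <= cc d g j) ->
  (* a is the (unique) maximizer A^dagger *)
  feasible d g a p ->
  (forall b, feasible d g b p -> obj d b p <= obj d a p) ->
  (forall b, feasible d g b p -> obj d b p = obj d a p ->
     forall j, (1 <= j <= p)%N -> b j = a j) ->
  (* nu is the largest index attaining max_j d_j a_j *)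
  (1 <= nu <= p)%N ->
  d nu * a nu = maxdb d a p ->
  (forall j, (nu < j <= p)%N -> d j * a j <> maxdb d a p) ->
  (3 <= nu)%N ->
  (forall k, (3 <= k <= p.-1)%N ->
     Mk d g p k.+1 <= Mk d g p k /\
     (Mk d g p k = Mk d g p k.+1 <-> ratk d g k = cc d g k.+1)) /\
  ((nu <= p.-1)%N ->
     (d nu.+1 * a nu.+1 < d nu * a nu <-> cc d g nu.+1 < ratk d g nu) /\
     ((3 <= nu <= p.-1)%N /\ cc d g nu.+1 < ratk d g nu /\
      (forall k, (3 <= k)%N -> (k < nu)%N -> ~ (cc d g k.+1 < ratk d g k))) /\
     Mk d g p nu.+1 < Mk d g p nu).
Proof.
move=> hp hd hg hs ha hopt _ hnu hnumax hnulast hnu3.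
have hmono : forall k, (3 <= k)%N -> (k < p)%N ->
    Mk d g p k.+1 <= Mk d g p k /\
    (Mk d g p k = Mk d g p k.+1 <-> ratk d g k = cc d g k.+1).
  by move=> k h1 h2; exact: (@mono R p d g hd hg k h1 h2).
split.
  move=> k /andP[h1 h2]; apply: hmono => //; lia.
pose P k := (3 <= k)%N && ((k == p) || ((k < p)%N && (cc d g k.+1 < ratk d g k))).
have exP : exists k, P k by exists p; rewrite /P hp eqxx.
case: (ex_minnP exP) => K HK Kmin.
have /andP[K3 HK'] := HK.
have Kp : (K <= p)%N by apply: Kmin; rewrite /P hp eqxx.
have hmin : forall j, (3 <= j)%N -> (j < K)%N -> ~ (cc d g j.+1 < ratk d g j).
  move=> j j3 jK hc.
  have : (K <= j)%N.
    apply: Kmin; rewrite /P j3 hc /=; apply/orP; right; rewrite andbT; lia.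
  lia.
have hlast : (K < p)%N -> cc d g K.+1 < ratk d g K.
  move=> Kp'; move: HK'; case/orP => [/eqP eK | /andP[_ ?]] //; lia.
have hK : (3 <= K <= p)%N by apply/andP; split.
have [nuK hlt] := @nu_eq R p d g hd hg hs K a nu hK hmin hlast ha hopt hnu hnumax hnulast.
subst nu.
move=> hKp; have Kp' : (K < p)%N by lia.
have hc := hlast Kp'.
split; first by split => _ //; exact: hlt.
split; first by split => //; apply/andP; split.
have [hle hiff] := hmono K K3 Kp'.
rewrite lt_neqAle hle andbT; apply/eqP => e.
have := proj1 hiff (esym e); move=> e2; move: hc; rewrite e2 ltxx //.
Qed.
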